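(* Let $\mathcal V$ be a multivector field on $X$ and let $S\subset X$ be a locally closed, $\mathcal V$-compatible invariant set. Then $S$ is an isolated invariant set (indeed $\operatorname{cl}S$ isolates $S$).
   Context: $X$ is a finite $T_0$ topological space. For $A\subset X$, $\operatorname{cl}A$ is its closure and $\operatorname{mo}A:=\operatorname{cl}A\setminus A$. $A$ is locally closed if it is the intersection of an open and a closed subset of $X$. $H$ denotes relative singular homology. A multivector is a nonempty locally closed subset of $X$; a multivector field $\mathcal V$ on $X$ is a partition of $X$ into multivectors. For $x\in X$, $[x]$ denotes the element of $\mathcal V$ containing $x$. A multivector $V$ is critical if $H(\operatorname{cl}V,\operatorname{mo}V)\neq0$, regular otherwise. $A\subset X$ is $\mathcal V$-compatible if for every $x\in X$ either $[x]\cap A=\emptyset$ or $[x]\subset A$. Put $\Pi_{\mathcal V}(x):=[x]\cup\operatorname{cl}\{x\}$ and $\Pi_{\mathcal V}(A):=\bigcup_{x\in A}\Pi_{\mathcal V}(x)$. A $\mathbb Z$-interval is $\mathbb Z\cap I$ for a real interval $I$. A solution in $A\subset X$ is a map $\varphi:D\to A$ on a $\mathbb Z$-interval $D$ with $\varphi(i+1)\in\Pi_{\mathcal V}(\varphi(i))$ whenever $i,i+1\in D$; it is full if $D=\mathbb Z$, and a path if $D$ is bounded, its endpoints being $\varphi(\min D)$ and $\varphi(\max D)$. A full solution $\varphi$ is essential if for every $t\in\mathbb Z$ with $[\varphi(t)]$ regular, the set $\{s\in\mathbb Z:\varphi(s)\notin[\varphi(t)]\}$ is unbounded below and unbounded above.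 $\operatorname{Inv}A$ is the set of $x\in A$ such that there is an essential full solution $\varphi$ with image in $A$ and $\varphi(0)=x$; $A$ is invariant if $\operatorname{Inv}A=A$. A closed set $N$ isolates an invariant set $S\subset N$ if (a) every path in $N$ with both endpoints in $S$ has image contained in $S$, and (b) $\Pi_{\mathcal V}(S)\subset N$. An invariant set is an isolated invariant set if some closed set isolates it. *)

(* Defs.v *)
From HB Require Import structures.
From mathcomp Require Import all_boot all_order all_algebra.
Set Implicit Arguments. Unset Strict Implicit. Unset Printing Implicit Defensive.
Import Order.TTheory GRing.Theory Num.Theory.
Local Open Scope ring_scope.

(** A topology on a finite type, given by its family of open sets
    (for a finite carrier, closure under binary unions/intersections suffices). *)
Definition is_topology (X : finType) (O : {set {set X}}) : Prop :=
  [/\ set0 \in O, setT \in O,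
      (forall U W, U \in O -> W \in O -> U :|: W \in O) &
      (forall U W, U \in O -> W \in O -> U :&: W \in O)].

Definition T0 (X : finType) (O : {set {set X}}) : Prop :=
  forall x y : X, x != y -> exists2 U, U \in O & (x \in U) != (y \in U).

Definition closedb (X : finType) (O : {set {set X}}) (A : {set X}) : bool :=
  ~: A \in O.

Definition cl (X : finType) (O : {set {set X}}) (A : {set X}) : {set X} :=
  [set x | [forall B : {set X}, (closedb O B && (A \subset B)) ==> (x \in B)]].

Definition mo (X : finType) (O : {set {set X}}) (A : {set X}) : {set X} :=
  cl O A :\: A.

Definition locally_closed (X : finType) (O : {set {set X}}) (A : {set X}) : Prop :=
  exists U C, [/\ U \in O, closedb O C & A = U :&: C].

(** ---- Relative homology of a pair (K, L), L ⊂ K ⊂ X, computed (via McCord's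
    theorem) as relative simplicial homology with integer coefficients of the
    order complexes of the specialization order x < y :<=> x <> y /\ x ∈ cl{y}. *)
Definition spec_lt (X : finType) (O : {set {set X}}) (x y : X) : bool :=
  (x != y) && (x \in cl O [set y]).

Definition simplex (X : finType) (O : {set {set X}}) (A : {set X}) (s : seq X) : bool :=
  [&& s != [::], all (fun x => x \in A) s & sorted (spec_lt O) s].

(** integer chains as formal sums (finite lists of coefficient/simplex pairs) *)
Definition coef (X : finType) (c : seq (int * seq X)) (s : seq X) : int :=
  \sum_(p <- c | p.2 == s) p.1.

Definition face (X : Type) (s : seq X) (i : nat) : seq X := take i s ++ drop i.+1 s.

Definition bd (X : finType) (c : seq (int * seq X)) : seq (int * seq X) :=
  flatten [seq [seq ((-1) ^+ i * p.1, face p.2 i) | i <- iota 0 (size p.2)] | p <- c].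

Definition chain_in (X : finType) (O : {set {set X}}) (K : {set X}) (n : nat)
    (c : seq (int * seq X)) : Prop :=
  forall p, p \in c -> simplex O K p.2 /\ size p.2 = n.+1.

Definition rel_cycle (X : finType) (O : {set {set X}}) (K L : {set X}) (n : nat)
    (c : seq (int * seq X)) : Prop :=
  chain_in O K n c /\
  forall s, simplex O K s -> ~~ simplex O L s -> coef (bd c) s = 0.

Definition rel_boundary (X : finType) (O : {set {set X}}) (K L : {set X}) (n : nat)
    (c : seq (int * seq X)) : Prop :=
  exists d, chain_in O K n.+1 d /\
  forall s, simplex O K s -> ~~ simplex O L s -> coef c s = coef (bd d) s.

Definition rel_homology_nonzero (X : finType) (O : {set {set X}}) (K L : {set X}) : Prop :=
  exists n c, rel_cycle O K L n c /\ ~ rel_boundary O K L n c.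

Definition critical (X : finType) (O : {set {set X}}) (V : {set X}) : Prop :=
  rel_homology_nonzero O (cl O V) (mo O V).

Definition multivector (X : finType) (O : {set {set X}}) (A : {set X}) : Prop :=
  A != set0 /\ locally_closed O A.

Definition multivector_field (X : finType) (O : {set {set X}}) (V : {set {set X}}) : Prop :=
  partition V [set: X] /\ forall A, A \in V -> multivector O A.

(** [x] is pblock V x *)
Definition compatible (X : finType) (V : {set {set X}}) (A : {set X}) : Prop :=
  forall x : X, [disjoint pblock V x & A] \/ pblock V x \subset A.

Definition Pi (X : finType) (O : {set {set X}}) (V : {set {set X}}) (x : X) : {set X} :=
  pblock V x :|: cl O [set x].

Definition PiS (X : finType) (O : {set {set X}}) (V : {set {set X}}) (A : {set X}) : {set X} :=
  \bigcup_(x in A) Pi O V x.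

Definition full_solution_in (X : finType) (O : {set {set X}}) (V : {set {set X}})
    (A : {set X}) (phi : int -> X) : Prop :=
  (forall t, phi t \in A) /\ (forall t, phi (t + 1) \in Pi O V (phi t)).

Definition essential (X : finType) (O : {set {set X}}) (V : {set {set X}})
    (phi : int -> X) : Prop :=
  forall t, ~ critical O (pblock V (phi t)) ->
    (forall m, exists s, s < m /\ phi s \notin pblock V (phi t)) /\
    (forall m, exists s, m < s /\ phi s \notin pblock V (phi t)).

Definition in_Inv (X : finType) (O : {set {set X}}) (V : {set {set X}})
    (A : {set X}) (x : X) : Prop :=
  exists phi, [/\ full_solution_in O V A phi, essential O V phi & phi 0 = x].

Definition invariant_set (X : finType) (O : {set {set X}}) (V : {set {set X}})
    (A : {set X}) : Prop :=
  forall x, x \in A <-> in_Inv O V A x.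

Definition isolates (X : finType) (O : {set {set X}}) (V : {set {set X}})
    (N S : {set X}) : Prop :=
  [/\ closedb O N, S \subset N,
      (forall (phi : int -> X) (a b : int), a <= b ->
         (forall i, a <= i <= b -> phi i \in N) ->
         (forall i, a <= i < b -> phi (i + 1) \in Pi O V (phi i)) ->
         phi a \in S -> phi b \in S ->
         forall i, a <= i <= b -> phi i \in S)
    & PiS O V S \subset N].

Definition isolated_invariant (X : finType) (O : {set {set X}}) (V : {set {set X}})
    (S : {set X}) : Prop :=
  invariant_set O V S /\ exists N, isolates O V N S.

(* Main.v *)
Require Import Defs.
From HB Require Import structures.
From mathcomp Require Import all_boot all_order all_algebra.
From mathcomp Require Import zify.
Set Implicit Arguments. Unset Strict Implicit. Unset Printing Implicit Defensive.
Import Order.TTheory GRing.Theory Num.Theory.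

Section Aux.
Variables (X : finType) (O : {set {set X}}).

Lemma clP (A : {set X}) x :
  reflect (forall B, closedb O B -> A \subset B -> x \in B) (x \in cl O A).
Proof.
rewrite inE; apply: (iffP forallP) => H B.
  by move=> cB sAB; move: (H B); rewrite cB sAB.
by apply/implyP => /andP [cB sAB]; apply: H.
Qed.

Lemma subset_cl (A : {set X}) : A \subset cl O A.
Proof. by apply/subsetP => x xA; apply/clP => B _ /subsetP; apply. Qed.

Lemma cl_min (A C : {set X}) : closedb O C -> A \subset C -> cl O A \subset C.
Proof. by move=> cC sAC; apply/subsetP => x /clP; apply. Qed.

Lemma cl_mono (A B : {set X}) : A \subset B -> cl O A \subset cl O B.
Proof.
move=> sAB; apply/subsetP => x /clP H; apply/clP => C cC sBC.
by apply: H => //; apply: subset_trans sBC.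
Qed.

Lemma cl_open (U : {set X}) x y : U \in O -> y \in cl O [set x] -> y \in U -> x \in U.
Proof.
move=> UO /clP H yU; apply/negPn/negP => xU.
have : y \in ~: U.
  apply: H; first by rewrite /closedb setCK.
  by rewrite sub1set inE.
by rewrite inE yU.
Qed.

Lemma cl_closed (A : {set X}) : is_topology O -> closedb O (cl O A).
Proof.
case=> O0 _ OU _; rewrite /closedb.
have -> : ~: cl O A = \bigcup_(B | closedb O B && (A \subset B)) ~: B.
  apply/setP => x; rewrite inE; apply/idP/idP.
    apply: contraR => Hn.
    apply/clP => B cB sAB; apply/negPn/negP => xB; apply: (negP Hn); apply/bigcupP; exists B.
      by rewrite cB.
    by rewrite inE.
  move=> /bigcupP [B /andP [cB sAB]]; rewrite inE => xB; apply/negP => /clP H.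
  by rewrite (H B cB sAB) in xB.
apply: (big_ind (fun U => U \in O)).
- exact: O0.
- by move=> U W hU hW; apply: OU.
- by move=> B /andP [].
Qed.

End Aux.

Theorem proposition4p12 (X : finType) (O : {set {set X}})
    (HO : is_topology O) (HT0 : T0 O)
    (V : {set {set X}}) (HV : multivector_field O V)
    (S : {set X}) (HSlc : locally_closed O S) (HScomp : compatible V S)
    (HSinv : invariant_set O V S) :
  isolated_invariant O V S /\ isolates O V (cl O S) S.
Proof.
have xinb : forall x, x \in pblock V x.
  move=> x; rewrite mem_pblock; case: HV => /and3P [/eqP -> _ _] _.
  by rewrite inE.
have step : forall x y, x \in cl O S -> x \notin S -> y \in Pi O V x -> y \notin S.
  move=> x y xcl xS; rewrite inE => /orP [yb|ycl].
    case: (HScomp x) => [/disjoint_setI0 H|/subsetP H].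
      apply/negP => yS.
      have : y \in pblock V x :&: S by rewrite inE yb yS.
      by rewrite H inE.
    by rewrite (H x (xinb x)) in xS.
  apply/negP => yS; move: xS; apply/negP/negPn.
  case: HSlc => U [C [UO cC SE]].
  move: (yS); rewrite SE inE => /andP [yU yC].
  rewrite inE (cl_open UO ycl yU) /=.
  have sSC : S \subset C by rewrite SE; exact: subsetIr.
  exact: (subsetP (cl_min cC sSC)).
have iso : isolates O V (cl O S) S.
  split.
  - exact: cl_closed.
  - exact: subset_cl.
  - move=> phi a b ab Hin Hstep pa pb i /andP [ai ib].
    apply/negPn/negP => pi.
    have H : forall k : nat, (i + (Posz k) <= b)%R -> phi (i + (Posz k))%R \notin S.
      elim=> [|k IH] hk; first by rewrite addr0.
      have -> : (i + (Posz k.+1) = (i + (Posz k)) + 1)%R by lia.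
      apply: (step (phi (i + (Posz k))%R)).
      + apply: Hin; lia.
      + apply: IH; lia.
      + apply: Hstep; lia.
    have [k hk] : exists k : nat, b = (i + (Posz k))%R.
      exists `|b - i|%N; lia.
    by move: (H k); rewrite -hk lexx pb => /(_ isT).
  - apply/subsetP => y /bigcupP [x xS]; rewrite inE => /orP [yb|ycl].
      case: (HScomp x) => [/disjoint_setI0 H|/subsetP H].
        have : x \in pblock V x :&: S by rewrite inE xinb xS.
        by rewrite H inE.
      by apply: (subsetP (subset_cl O S)); apply: H.
    apply: (subsetP (cl_mono O _)) ycl; by rewrite sub1set.
split=> //; split=> //; by exists (cl O S).
Qed.
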